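(* Let $n\ge 1$ and let $M\le N$ be integers. The maximal chains in the partially ordered set of all pure diagrams lying in $B_{M,N}$ (of any codimension $0,1,\dots,n$) are in one-to-one correspondence with the numberings of the entries of an $(N-M+1)\times(n+1)$ matrix by the numbers $1,2,\dots,(N-M+1)(n+1)$, each used exactly once, such that the numbers increase from right to left along each row and from top to bottom along each column.
   Context: $B_{M,N}$ is the $\mathbb Q$-vector space of arrays $\beta=(\beta_{i,j})$ indexed by $0\le i\le n$, $j\in\mathbb Z$, with $\beta_{i,j}=0$ unless $M+i\le j\le N+i$. For integers $d_0<d_1<\dots<d_t$ with $0\le t\le n$, the pure diagram $\pi(d_0,\dots,d_t)$ is the array whose entry in position $(i,d_i)$ is $(-1)^i\prod_{0\le j\le t,\,j\ne i}\frac{1}{d_j-d_i}$ for $i=0,\dots,t$, and whose other entries are $0$; its codimension is $t$. It lies in $B_{M,N}$ iff $M+i\le d_i\le N+i$ for all $i$. Partial order: $\pi(d_0,\dots,d_t)\le\pi(d'_0,\dots,d'_u)$ iff $t\ge u$ and $d_i\le d'_i$ for $i=0,\dots,u$. A maximal chain is a totally ordered subset not properly contained in another totally ordered subset. *)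

(* Defs.v *)
From mathcomp Require Import all_boot all_order all_algebra.
Unset Printing Implicit Defensive.
Import Order.TTheory GRing.Theory Num.Theory.
Local Open Scope ring_scope.

Definition array (n : nat) := 'I_n.+1 -> int -> rat.

Definition degseq := seq int.

Definition pure_diagram (n : nat) (d : degseq) : array n :=
  fun i j =>
    if ((i : nat) < size d)%N && (j == nth 0 d i) then
      (-1) ^+ (i : nat) *
      \prod_(k < size d | (k : nat) != (i : nat))
         ((nth 0 d k - nth 0 d i)%:~R)^-1
    else 0.

(* d_0 < d_1 < ... < d_t with 0 <= t <= n, and M + i <= d_i <= N + i
   (i.e. pi(d) lies in B_{M,N}). *)
Definition valid_degseq (n : nat) (M N : int) (d : degseq) : bool :=
  [&& (0 < size d)%N, (size d <= n.+1)%N, sorted (fun a b : int => a < b) d &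
      all (fun i : nat => (M + i%:Z <= nth 0 d i) && (nth 0 d i <= N + i%:Z))
          (iota 0 (size d))].

(* pi(d_0..d_t) <= pi(d'_0..d'_u) iff t >= u and d_i <= d'_i for i = 0..u. *)
Definition degseq_le (d d' : degseq) : Prop :=
  (size d' <= size d)%N /\ forall i : nat, (i < size d')%N -> nth 0 d i <= nth 0 d' i.

Definition pure_in_B (n : nat) (M N : int) (b : array n) : Prop :=
  exists d, valid_degseq n M N d /\ b = pure_diagram n d.

Definition pure_le (n : nat) (M N : int) (b b' : array n) : Prop :=
  exists d d', [/\ valid_degseq n M N d, valid_degseq n M N d',
                   b = pure_diagram n d, b' = pure_diagram n d' & degseq_le d d'].

Definition is_chain (n : nat) (M N : int) (C : array n -> Prop) : Prop :=
  (forall b, C b -> pure_in_B n M N b) /\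
  (forall b b', C b -> C b' -> pure_le n M N b b' \/ pure_le n M N b' b).

Definition is_maximal_chain (n : nat) (M N : int) (C : array n -> Prop) : Prop :=
  is_chain n M N C /\
  forall C' : array n -> Prop, is_chain n M N C' -> (forall b, C b -> C' b) ->
    forall b, C' b -> C b.

Definition maximal_chain (n : nat) (M N : int) :=
  {C : array n -> Prop | is_maximal_chain n M N C}.

Definition is_numbering (r c : nat) (f : 'I_r -> 'I_c -> nat) : Prop :=
  [/\ (forall i j, (1 <= f i j <= r * c)%N),
      (forall i j i' j', f i j = f i' j' -> i = i' /\ j = j'),
      (forall i (j j' : 'I_c), (j < j')%N -> (f i j' < f i j)%N) &
      (forall (i i' : 'I_r) j, (i < i')%N -> (f i j < f i' j)%N)].

Definition numbering (r c : nat) := {f : 'I_r -> 'I_c -> nat | is_numbering r c f}.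

(* Main.v *)
Require Import Defs.
From mathcomp Require Import all_boot all_order all_algebra.
From mathcomp Require Import zify.
From Stdlib Require Import Classical FunctionalExtensionality.
Set Implicit Arguments. Unset Strict Implicit. Unset Printing Implicit Defensive.

Lemma sum_lt r t : \sum_(i < r) ((i < t)%N : nat) = minn r t.
Proof.
elim: r => [|r IH]; first by rewrite big_ord0 min0n.
rewrite big_ord_recr /= IH; case: (ltnP r t) => h; lia.
Qed.

Lemma sum_b_le r (p : 'I_r -> bool) : \sum_(i < r) (p i : nat) <= r.
Proof.
apply: leq_trans (_ : \sum_(i < r) ((i < r)%N : nat) <= r).
  by apply: leq_sum => i _; rewrite ltn_ord leq_b1.
by rewrite sum_lt minnn.
Qed.

Lemma sum_prefix r (p : 'I_r -> bool) :
  (forall i i' : 'I_r, (i' <= i)%N -> p i -> p i') ->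
  forall i : 'I_r, (i < \sum_(i0 < r) (p i0 : nat))%N = p i.
Proof.
elim: r p => [|r IH] p Hp i; first by case: i.
rewrite big_ord_recr /=.
case Pm: (p ord_max).
  have Hall : forall j, p j by move=> j; apply: (Hp ord_max) Pm; rewrite /= -ltnS.
  rewrite Hall addn1 ltnS.
  have -> : \sum_(i0 < r) (p (widen_ord (leqnSn r) i0) : nat) = r.
    transitivity (\sum_(i0 < r) ((i0 < r)%N : nat)); last by rewrite sum_lt minnn.
    apply: eq_bigr => j _; by rewrite Hall ltn_ord.
  by rewrite -ltnS ltn_ord.
rewrite -[X in (_ < X)%N]/(_ + 0) addn0.
have Hp' : forall i i' : 'I_r, (i' <= i)%N -> p (widen_ord (leqnSn r) i) -> p (widen_ord (leqnSn r) i').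
  by move=> j j' le; apply: Hp.
case: (ltnP i r) => hi.
  have -> : i = widen_ord (leqnSn r) (Ordinal hi) by apply: val_inj.
  exact: (IH _ Hp' (Ordinal hi)).
have -> : i = ord_max by apply: val_inj => /=; have := ltn_ord i; lia.
rewrite Pm; apply/negbTE; rewrite -leqNgt /=.
exact: sum_b_le.
Qed.

Lemma le_sum_eq c (A B : 'I_c -> nat) :
  (forall j, A j <= B j) -> \sum_j A j = \sum_j B j -> forall j, A j = B j.
Proof.
move=> le eqs j; apply/eqP; rewrite eqn_leq le /=.
rewrite leqNgt; apply/negP => lt.
move: eqs; rewrite (bigD1 j) //= (bigD1 j (P:=predT)) //= => e.
have h : \sum_(i < c | i != j) A i <= \sum_(i < c | i != j) B i by apply: leq_sum.
have := leq_add lt h; by rewrite addSn -e ltnn.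
Qed.

Lemma le_sum1 c (A B : 'I_c -> nat) :
  (forall j, A j <= B j) -> \sum_j B j = (\sum_j A j).+1 ->
  forall j j', A j < B j -> A j' < B j' -> j = j' /\ B j = (A j).+1.
Proof.
move=> le eqs j j' lt lt'.
have hB : \sum_j B j = \sum_j A j + \sum_j (B j - A j).
  rewrite -big_split; apply: eq_bigr => i _ /=; by rewrite subnKC.
have hs : \sum_j (B j - A j) = 1 by lia.
have hj : B j - A j <= \sum_j (B j - A j) by rewrite (bigD1 j) //= leq_addr.
split; last by lia.
apply/eqP; apply/negP => /negP ne.
move: hs; rewrite (bigD1 j) //= (bigD1 j') //=; first lia.
by rewrite eq_sym.
Qed.

Lemma le_bigD c (A : 'I_c -> nat) j : A j <= \sum_i A i.
Proof. by rewrite (bigD1 j) //= leq_addr. Qed.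

Import GRing.Theory.

Section Comb.
Variables m n : nat.
Notation hv := ('I_n.+1 -> nat).
Definition hle (h h' : hv) := forall j, h j <= h' j.
Definition validh (h : hv) :=
  [/\ forall j j' : 'I_n.+1, j <= j' -> h j <= h j', h ord0 <= m & forall j, h j <= m.+1].
Definition hs (h : hv) := \sum_j h j.
Definition KK := m.+1 * n.+1.
Definition htop : hv := fun j => if j == ord0 then m else m.+1.

Lemma hle_trans a b c : hle a b -> hle b c -> hle a c.
Proof. by move=> h1 h2 j; apply: leq_trans (h1 j) (h2 j). Qed.

Lemma hle_hs a b : hle a b -> hs a <= hs b.
Proof. by move=> h; apply: leq_sum => j _; apply: h. Qed.

Lemma hle_eq a b : hle a b -> hs a = hs b -> a = b.
Proof. move=> h e; apply: functional_extensionality; exact: le_sum_eq h e. Qed.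

Lemma hs_top : hs htop = KK.-1.
Proof.
rewrite /hs big_ord_recl /htop eqxx.
have -> : \sum_(i < n) (if lift ord0 i == ord0 then m else m.+1) = \sum_(i < n) m.+1.
  by apply: eq_bigr => i _.
rewrite sum_nat_const card_ord /KK; lia.
Qed.

Lemma valid_top : validh htop.
Proof.
split; rewrite /htop ?eqxx //.
  move=> j j' le; case: (eqVneq j ord0) => [ej|nj]; case: (eqVneq j' ord0) => [ej'|nj'] //.
  by move: nj; rewrite (_ : j = ord0) ?eqxx //; apply: val_inj; move: le; rewrite ej' /=; lia.
by move=> j; case: eqP.
Qed.

Lemma valid_le_top h : validh h -> hle h htop.
Proof. case=> _ h0 hm j; rewrite /htop; case: eqP => [->|] //. Qed.

Lemma hs_lt h : validh h -> hs h < KK.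
Proof.
move=> v; have := hle_hs (valid_le_top v); rewrite hs_top /KK; lia.
Qed.

Lemma KK_gt0 : 0 < KK. Proof. by rewrite /KK muln_gt0. Qed.

Lemma valid_bot : validh (fun _ => 0).
Proof. by split. Qed.

Section Chain.
Variable Ch : hv -> Prop.
Hypothesis Chv : forall h, Ch h -> validh h.
Hypothesis Chc : forall h h', Ch h -> Ch h' -> hle h h' \/ hle h' h.
Hypothesis Chm : forall X, validh X -> (forall h, Ch h -> hle h X \/ hle X h) -> Ch X.

Lemma Ch_bot : Ch (fun _ => 0).
Proof. apply: Chm; first exact: valid_bot. by move=> h _; right. Qed.

Lemma Ch_top : Ch htop.
Proof. apply: Chm; first exact: valid_top. move=> h /Chv v; left; exact: valid_le_top. Qed.

Lemma Ch_uniq a b : Ch a -> Ch b -> hs a = hs b -> a = b.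
Proof.
move=> ca cb e; case: (Chc ca cb) => h; first exact: hle_eq.
by symmetry; apply: hle_eq.
Qed.

Lemma Ch_step H k : Ch H -> hs H = k -> k.+1 < KK -> exists H', Ch H' /\ hs H' = k.+1.
Proof.
move=> cH eH lt.
suff main : forall b s U, s <= b -> Ch U -> hs U = s -> k < s ->
   exists H', Ch H' /\ hs H' = k.+1.
  apply: (main KK.-1 KK.-1 htop) => //; first [exact: Ch_top | exact: hs_top | lia].
elim=> [|b IH] s U sb cU eU ks; first lia.
case: (classic (exists Y, Ch Y /\ k < hs Y < s)).
  case=> Y [cY /andP [h1 h2]]; apply: (IH (hs Y) Y) => //; lia.
move=> nomin.
case: (ltngtP s k.+1) => [|hsk|hsk]; first lia; last by exists U; rewrite eU.
have HU : hle H U.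
  case: (Chc cH cU) => // h; have := hle_hs h; lia.
have ex : [exists j, H j < U j].
  case: (boolP [exists j, H j < U j]) => // nex; exfalso.
  move: nex; rewrite negb_exists => /forallP al.
  have : hle U H by move=> j; have := al j; rewrite -leqNgt.
  move/hle_hs; lia.
case/existsP: ex => j0 Pj0.
case: (@arg_maxnP _ j0 (fun j => H j < U j) (fun j : 'I_n.+1 => (j : nat)) Pj0) => c Pc Cmax.
pose X : hv := fun j => H j + (j == c).
have XU : hle X U.
  move=> j; rewrite /X; case: eqP => [->|_]; first by rewrite addn1.
  by rewrite addn0.
have HX : hle H X by move=> j; rewrite /X leq_addr.
have vU := Chv cU; have vH := Chv cH.
have vX : validh X.
  case: vU => _ u0 um; case: vH => hmon _ _.
  split.
  - move=> j j' le; rewrite /X.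
    case: (eqVneq j c) => [ejc|njc]; case: (eqVneq j' c) => [ejc'|njc'].
    + by rewrite ejc ejc'.
    + have cj' : c < j'.
        rewrite ltn_neqAle -ejc le andbT; apply/negP => /eqP e.
        by move: njc'; rewrite (_ : j' = c) ?eqxx //; apply: val_inj; rewrite /= -e ejc.
      have : ~~ (H j' < U j') by apply/negP => /Cmax /= h; move: h; rewrite leqNgt cj'.
      rewrite -leqNgt => UH.
      have := HU j'; have := hmon _ _ le.
      have : U c <= U j'. by case: (Chv cU) => mu _ _; apply: mu; exact: ltnW.
      rewrite ejc in Pc *; rewrite addn1 addn0; lia.
    + rewrite addn0; apply: leq_trans (hmon _ _ le) _; exact: leq_addr.
    + by rewrite !addn0; apply: hmon.
  - exact: leq_trans (XU _) u0.
  - move=> j; exact: leq_trans (XU _) (um _).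
have eX : hs X = k.+1.
  rewrite /hs /X big_split /= -/(hs H) eH.
  rewrite (bigD1 c) //= eqxx big1 ?addn0 ?addn1 //.
  by move=> i /negbTE ->.
exists X; split => //.
apply: Chm => // Y cY.
case: (Chc cY cH) => [YH|HY]; first by left; exact: hle_trans YH HX.
have kY : k <= hs Y by rewrite -eH; exact: hle_hs.
case: (ltngtP k (hs Y)) => [kY'|kY'|eY]; last first.
- by left; rewrite (Ch_uniq cY cH) // eH.
- lia.
have sY : s <= hs Y.
  rewrite leqNgt; apply/negP => lt'; apply: nomin; exists Y; split => //; by rewrite kY' lt'.
case: (Chc cY cU) => [YU|UY]; last by right; exact: hle_trans XU UY.
have := hle_hs YU; rewrite eU => le'.
have e' : hs Y = hs U by lia.
right; rewrite (hle_eq YU e'); exact: XU.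
Qed.

Lemma Ch_sat k : k < KK -> exists H, Ch H /\ hs H = k.
Proof.
elim: k => [|k IH] lt.
  exists (fun _ => 0); split; first exact: Ch_bot.
  by rewrite /hs big1.
case: IH; first lia.
move=> H [cH eH]; exact: Ch_step cH eH lt.
Qed.

End Chain.
End Comb.
Section Num.
Variables m n : nat.
Notation hv := ('I_n.+1 -> nat).
Notation KK := (KK m n).
Notation validh := (validh m).

Lemma sum_imp r (p q : 'I_r -> bool) : (forall i, p i -> q i) ->
  \sum_(i < r) (p i : nat) <= \sum_(i < r) (q i : nat).
Proof. move=> imp; apply: leq_sum => i _; case: (boolP (p i)) => [/imp ->|] //; by case: (q i). Qed.

Definition fromH (H : nat -> hv) (i : 'I_m.+1) (j : 'I_n.+1) :=
  \sum_(k < KK) ((~~ (i < H k j)) : nat).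

Definition Jk k (f : 'I_m.+1 -> 'I_n.+1 -> nat) : hv :=
  fun j => \sum_(i < m.+1) ((f i j <= k) : nat).

Section FromH.
Variable H : nat -> hv.
Hypothesis Hv : forall k, k < KK -> validh (H k).
Hypothesis Hs : forall k, k < KK -> hs (H k) = k.
Hypothesis Hn : forall k k', k <= k' -> k' < KK -> hle (H k) (H k').

Lemma fromH_spec i j k : k < KK -> (k < fromH H i j) = ~~ (i < H k j).
Proof.
move=> lt; rewrite /fromH.
have := @sum_prefix KK (fun k0 : 'I_KK => ~~ (i < H k0 j)) _ (Ordinal lt).
apply.
move=> a b le; rewrite -!leqNgt => h; apply: leq_trans h.
exact: (Hn le (ltn_ord a)).
Qed.

Lemma H0 j : H 0 j = 0.
Proof.
have := le_bigD (H 0) j; rewrite -/(hs (H 0)) Hs ?KK_gt0 //; lia.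
Qed.

Lemma Htop : H KK.-1 = htop m (n:=n).
Proof.
have lt : KK.-1 < KK by have := @KK_gt0 m n; lia.
apply: hle_eq; first exact: valid_le_top (Hv lt).
by rewrite Hs // hs_top.
Qed.

Lemma fromH_ge1 i j : 0 < fromH H i j.
Proof. by rewrite fromH_spec ?H0 // KK_gt0. Qed.

Lemma fromH_leK i j : fromH H i j <= KK.
Proof. exact: sum_b_le. Qed.

Lemma fromH_inj i j i' j' : fromH H i j = fromH H i' j' -> i = i' /\ j = j'.
Proof.
move=> e.
set v := fromH H i j.
have v1 : 0 < v := fromH_ge1 i j.
have vK : v <= KK := fromH_leK i j.
have A1 : ~~ (i < H v.-1 j) by rewrite -fromH_spec; lia.
have A2 : ~~ (i' < H v.-1 j') by rewrite -fromH_spec; rewrite -?e -/v; lia.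
case: (ltngtP v KK) => [vlt|vgt|veq]; [|lia|].
- have B1 : i < H v j by apply/negPn; rewrite -fromH_spec // ltnn.
  have B2 : i' < H v j' by apply/negPn; rewrite -fromH_spec // -?e -/v ltnn.
  have hl : hle (H v.-1) (H v) by apply: Hn => //; lia.
  have hsv : hs (H v) = (hs (H v.-1)).+1 by rewrite !Hs //; lia.
  rewrite -!leqNgt in A1 A2.
  have [ejj eB] := le_sum1 hl hsv (leq_ltn_trans A1 B1) (leq_ltn_trans A2 B2).
  subst j'; split => //; apply: val_inj => /=.
  move: B1 B2; rewrite eB; lia.
- rewrite veq Htop /htop -!leqNgt in A1 A2.
  have hi := ltn_ord i; have hi' := ltn_ord i'.
  move: A1 A2; case: eqP => [->|]; case: eqP => [->|] //; try lia.
  move=> l1 l2; split => //; apply: val_inj => /=; lia.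
Qed.

Lemma fromH_num : is_numbering m.+1 n.+1 (fromH H).
Proof.
split.
- by move=> i j; rewrite fromH_ge1 /=; exact: fromH_leK.
- exact: fromH_inj.
- move=> i j j' lt.
  have le : fromH H i j' <= fromH H i j.
    apply: sum_imp => k; rewrite -!leqNgt => h; apply: leq_trans _ h.
    by case: (Hv (ltn_ord k)) => mon _ _; apply: mon; exact: ltnW.
  rewrite ltn_neqAle le andbT; apply/eqP => /fromH_inj [_ e]; subst; by rewrite ltnn in lt.
- move=> i i' j lt.
  have le : fromH H i j <= fromH H i' j.
    apply: sum_imp => k; rewrite -!leqNgt => h; apply: leq_trans h _; exact: ltnW.
  rewrite ltn_neqAle le andbT; apply/eqP => /fromH_inj [e _]; subst; by rewrite ltnn in lt.
Qed.

Lemma Jk_fromH k : k < KK -> Jk k (fromH H) = H k.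
Proof.
move=> lt; apply: functional_extensionality => j; rewrite /Jk.
transitivity (\sum_(i < m.+1) ((i < H k j) : nat)).
  apply: eq_bigr => i _; by rewrite leqNgt fromH_spec // negbK.
rewrite sum_lt; apply/minn_idPr; by case: (Hv lt) => _ _ ->.
Qed.

End FromH.
End Num.
Section NumF.
Variables m n : nat.
Notation hv := ('I_n.+1 -> nat).
Notation KK := (KK m n).
Notation validh := (validh m).

Section FromF.
Variable f : 'I_m.+1 -> 'I_n.+1 -> nat.
Hypothesis hf : is_numbering m.+1 n.+1 f.

Lemma f_row (i i' : 'I_m.+1) j : i <= i' -> f i j <= f i' j.
Proof.
case: hf => _ _ _ hr; rewrite leq_eqVlt => /orP [/eqP e|lt].
  by rewrite (_ : i = i') //; apply: val_inj.
exact: ltnW (hr _ _ _ lt).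
Qed.

Lemma f_col i (j j' : 'I_n.+1) : j <= j' -> f i j' <= f i j.
Proof.
case: hf => _ _ hc _; rewrite leq_eqVlt => /orP [/eqP e|lt].
  by rewrite (_ : j = j') //; apply: val_inj.
exact: ltnW (hc _ _ _ lt).
Qed.

Lemma Jk_spec k (i : 'I_m.+1) j : (i < Jk k f j) = (f i j <= k).
Proof.
rewrite /Jk; apply: (@sum_prefix m.+1 (fun i0 => f i0 j <= k)).
move=> a b le h; exact: leq_trans (f_row j le) h.
Qed.

Lemma f_bounds (i : 'I_m.+1) (j : 'I_n.+1) : 0 < f i j <= KK.
Proof. by case: hf => h _ _ _; exact: h. Qed.

Definition gf (x : 'I_m.+1 * 'I_n.+1) : 'I_KK.
Proof.
refine (@Ordinal KK (f x.1 x.2).-1 _).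
have := f_bounds x.1 x.2; rewrite /KK; lia.
Defined.

Lemma gf_inj : injective gf.
Proof.
case=> i j [i' j'] /(congr1 val) /= e.
have := f_bounds i j; have := f_bounds i' j' => /andP[b1 b2] /andP[b3 b4].
have e' : f i j = f i' j' by lia.
case: hf => _ hinj _ _; by case: (hinj _ _ _ _ e') => -> ->.
Qed.

Lemma gf_bij : bijective gf.
Proof. have := @inj_card_bij _ _ gf gf_inj; apply; by rewrite card_prod !card_ord. Qed.

Lemma hs_Jk k : k <= KK -> hs (Jk k f) = k.
Proof.
move=> lek; rewrite /hs /Jk exchange_big pair_big /=.
case: gf_bij => g' c1 c2.
rewrite (reindex g'); last by apply: onW_bij; exists gf.
transitivity (\sum_(v < KK) ((v < k) : nat)); last by rewrite sum_lt; apply/minn_idPr.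
apply: eq_bigr => v _.
have := c2 v; move: (g' v) => x /(congr1 val) /= ex.
have := f_bounds x.1 x.2; move=> /andP[b1 b2]; congr nat_of_bool.
case: x ex b1 b2 => i j /= ex b1 b2; rewrite -ex; lia.
Qed.

Lemma f_max : f ord_max ord0 = KK.
Proof.
case: gf_bij => g' c1 c2.
have lt : KK.-1 < KK by have := @KK_gt0 m n; lia.
have := c2 (Ordinal lt); move: (g' _) => [i j] /(congr1 val) ex.
change ((f i j).-1 = KK.-1) in ex.
have b := f_bounds i j.
have b2 := f_bounds ord_max ord0.
have : f i j <= f ord_max ord0.
  apply: leq_trans (@f_row i ord_max j (leq_ord i)) _; exact: f_col.
move: b b2 => /andP[? ?] /andP[? ?]; lia.
Qed.

Lemma Jk_valid k : k < KK -> validh (Jk k f).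
Proof.
move=> lt; split.
- move=> j j' le; apply: sum_imp => i h; exact: leq_trans (f_col i le) h.
- rewrite leqNgt; apply/negP => h.
  have : (@ord_max m) < Jk k f ord0 by [].
  by rewrite Jk_spec f_max leqNgt lt.
- move=> j; exact: sum_b_le.
Qed.

Lemma Jk_mono k k' : k <= k' -> hle (Jk k f) (Jk k' f).
Proof. move=> le j; apply: sum_imp => i h; exact: leq_trans h le. Qed.

End FromF.

Lemma num_eq f g : is_numbering m.+1 n.+1 f -> is_numbering m.+1 n.+1 g ->
  (forall k, k < KK -> Jk k f = Jk k g) -> f = g.
Proof.
move=> hf hg e.
apply: functional_extensionality => i; apply: functional_extensionality => j.
have := f_bounds hf i j; have := f_bounds hg i j => /andP[b1 b2] /andP[b3 b4].
have E : forall k, k < KK -> (f i j <= k) = (g i j <= k).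
  by move=> k lt; rewrite -(Jk_spec hf) -(Jk_spec hg) e.
case: (ltngtP (f i j) (g i j)) => // h.
- have := E (f i j); rewrite leqnn (leqNgt (g i j)) h; lia.
- have := E (g i j); rewrite leqnn (leqNgt (f i j)) h; lia.
Qed.

End NumF.
Section Iso.
Variables (n m : nat) (M N : int).
Hypothesis hN : N = (M + m%:Z)%R.
Notation hv := ('I_n.+1 -> nat).
Notation validh := (@validh m n).

Definition hd (d : degseq) : hv := fun j =>
  if (j < size d)%N then absz (nth 0%R d j - M - (j : nat)%:Z)%R else m.+1.
Definition Lh (h : hv) := \sum_(j < n.+1) ((h j <= m)%N : nat).
Definition hn (h : hv) (j : nat) : nat := if (j < n.+1)%N then h (inord j) else m.+1.
Definition dh (h : hv) : degseq := mkseq (fun j => (M + j%:Z + (hn h j)%:Z)%R) (Lh h).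

Lemma Lh_spec h : validh h -> forall j : 'I_n.+1, (j < Lh h)%N = (h j <= m)%N.
Proof.
case=> mon _ _ j; rewrite /Lh; apply: (@sum_prefix n.+1 (fun j => h j <= m)%N).
move=> a b le h'; exact: leq_trans (mon _ _ le) h'.
Qed.

Lemma Lh_bounds h : validh h -> (0 < Lh h <= n.+1)%N.
Proof.
move=> v; rewrite sum_b_le andbT.
have := Lh_spec v ord0; case: v => _ -> _; by [].
Qed.

Lemma hn_inord h (j : 'I_n.+1) : hn h j = h j.
Proof. by rewrite /hn ltn_ord inord_val. Qed.

Lemma nth_dh h j : (j < Lh h)%N -> nth 0%R (dh h) j = (M + j%:Z + (hn h j)%:Z)%R.
Proof. by move=> lt; rewrite /dh nth_mkseq. Qed.

Lemma size_dh h : size (dh h) = Lh h.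
Proof. by rewrite size_mkseq. Qed.

Lemma hn_le h j : validh h -> (j < Lh h)%N -> (hn h j <= m)%N.
Proof.
move=> v lt; have := Lh_bounds v => /andP [_ le].
have jn : (j < n.+1)%N by apply: leq_trans lt le.
have := Lh_spec v (Ordinal jn); rewrite /= lt => e.
by rewrite (_ : j = Ordinal jn) // hn_inord -e.
Qed.

Lemma hn_mono h i j : validh h -> (i <= j)%N -> (j < Lh h)%N -> (hn h i <= hn h j)%N.
Proof.
move=> v le lt; have := Lh_bounds v => /andP [_ le'].
have jn : (j < n.+1)%N by apply: leq_trans lt le'.
have iN : (i < n.+1)%N by apply: leq_ltn_trans le jn.
rewrite (_ : j = Ordinal jn) // (_ : i = Ordinal iN) // !hn_inord.
by case: v => mon _ _; apply: mon.
Qed.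

Lemma valid_dh h : validh h -> valid_degseq n M N (dh h).
Proof.
move=> v; have := Lh_bounds v => /andP [l0 l1].
rewrite /valid_degseq size_dh l0 l1 /=.
apply/andP; split.
  apply/(sortedP 0%R) => i; rewrite size_dh => lt.
  rewrite !nth_dh //; last by apply: ltnW.
  have := hn_mono v (leqnSn i) lt; lia.
apply/allP => i; rewrite mem_iota add0n => /andP [_ lt].
rewrite nth_dh //; have := hn_le v lt; rewrite hN; lia.
Qed.

Section ValidD.
Variable d : degseq.
Hypothesis vd : valid_degseq n M N d.

Lemma vd_size : (0 < size d <= n.+1)%N.
Proof. by case/and4P: vd => -> -> _ _. Qed.

Lemma vd_bounds j : (j < size d)%N ->
  (M + j%:Z <= nth 0%R d j)%R /\ (nth 0%R d j <= M + m%:Z + j%:Z)%R.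
Proof.
case/and4P: vd => _ _ _ /allP al lt.
have := al j; rewrite mem_iota add0n lt => /(_ isT) /andP [a b].
by split => //; move: b; rewrite hN; lia.
Qed.

Lemma vd_sorted i k : (i + k < size d)%N -> (nth 0%R d i + k%:Z <= nth 0%R d (i + k))%R.
Proof.
case/and4P: vd => _ _ /(sortedP 0%R) srt _.
elim: k => [|k IH] lt; first by rewrite addn0; lia.
have := srt (i + k)%N; rewrite -addnS => /(_ lt) h.
have : (i + k < size d)%N by rewrite addnS in lt; exact: ltnW.
move/IH; lia.
Qed.

Lemma vd_uniq : uniq d.
Proof. case/and4P: vd => _ _ srt _; exact: (Order.POrderTheory.lt_sorted_uniq srt). Qed.

Lemma hd_lt (j : 'I_n.+1) : (j < size d)%N -> (hd d j <= m)%N.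
Proof.
rewrite /hd => lt; rewrite lt; have := vd_bounds lt; lia.
Qed.

Lemma hd_val (j : 'I_n.+1) : (j < size d)%N -> ((hd d j)%:Z = nth 0%R d j - M - (j : nat)%:Z)%R.
Proof. rewrite /hd => lt; rewrite lt; have := vd_bounds lt; lia. Qed.

Lemma valid_hd : validh (hd d).
Proof.
have /andP [s0 s1] := vd_size.
split.
- move=> j j' le; case: (ltnP j' (size d)) => lt'.
    have lt : (j < size d)%N by apply: leq_ltn_trans le lt'.
    have := hd_val lt; have := hd_val lt'.
    have := @vd_sorted j (j' - j) ; rewrite subnKC // => /(_ lt').
    move: le; lia.
  rewrite {2}/hd ltnNge lt' /=.
  rewrite /hd; case: ifP => // lt; have := hd_lt lt; rewrite /hd lt => h; exact: leqW.
- exact: (@hd_lt ord0 s0).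
- move=> j; rewrite /hd; case: ifP => // lt; have := hd_lt lt; rewrite /hd lt => h; exact: leqW.
Qed.

Lemma Lh_hd : Lh (hd d) = size d.
Proof.
have /andP [s0 s1] := vd_size.
rewrite /Lh.
transitivity (\sum_(j < n.+1) ((j < size d)%N : nat)).
  apply: eq_bigr => j _; rewrite /hd; case: ifP => lt.
    by have := hd_lt lt; rewrite /hd lt => ->.
  by rewrite ltnn.
by rewrite sum_lt; apply/minn_idPr.
Qed.

Lemma dh_hd : dh (hd d) = d.
Proof.
apply: (@eq_from_nth _ 0%R); first by rewrite size_dh Lh_hd.
move=> j; rewrite size_dh Lh_hd => lt.
have /andP [_ s1] := vd_size.
have jn : (j < n.+1)%N by apply: leq_trans lt s1.
rewrite nth_dh ?Lh_hd // (_ : hn (hd d) j = hd d (Ordinal jn)); last first.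
  exact: (hn_inord (hd d) (Ordinal jn)).
rewrite (hd_val (j := Ordinal jn)) //=; lia.
Qed.

End ValidD.

Lemma hd_dh h : validh h -> hd (dh h) = h.
Proof.
move=> v; apply: functional_extensionality => j.
rewrite /hd size_dh Lh_spec //.
case: ifP => le.
  rewrite nth_dh ?Lh_spec // hn_inord; lia.
case: v => _ _ /(_ j); move/negbT: le; rewrite -ltnNge; lia.
Qed.

Lemma le_iff d d' : valid_degseq n M N d -> valid_degseq n M N d' ->
  degseq_le d d' <-> hle (hd d) (hd d').
Proof.
move=> v v'; split.
- case=> sz le j; case: (ltnP j (size d')) => lt'.
    have lt : (j < size d)%N by apply: leq_trans lt' sz.
    rewrite /hd lt lt'; have := le _ lt'; have := vd_bounds v lt; have := vd_bounds v' lt'; lia.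
  rewrite {2}/hd ltnNge lt' /=.
  rewrite /hd; case: ifP => // lt; have := hd_lt v lt; rewrite /hd lt => h; exact: leqW.
- move=> hl; have /andP [s0 s1] := vd_size v; have /andP [s0' s1'] := vd_size v'.
  have sz : (size d' <= size d)%N.
    rewrite leqNgt; apply/negP => lt.
    have jn : (size d < n.+1)%N by apply: leq_trans lt s1'.
    have := hl (Ordinal jn); rewrite /hd /= ltnn lt.
    have := @hd_lt d' v' (Ordinal jn) lt; rewrite /hd /= lt; lia.
  split => // i lt'.
  have lt : (i < size d)%N by apply: leq_trans lt' sz.
  have jn : (i < n.+1)%N by apply: leq_trans lt s1.
  have := hl (Ordinal jn); have := hd_val v (j := Ordinal jn) lt; have := hd_val v' (j := Ordinal jn) lt'.
  rewrite /=; lia.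
Qed.

Lemma pure_nz d (i : 'I_n.+1) : valid_degseq n M N d -> (i < size d)%N ->
  pure_diagram n d i (nth 0%R d i) != 0%R.
Proof.
move=> v lt; rewrite /pure_diagram lt eqxx /=.
rewrite mulf_neq0 //; first by rewrite expf_neq0 // oppr_eq0 oner_eq0.
apply/prodf_neq0 => k nk; rewrite invr_eq0 intr_eq0 subr_eq0.
have lk : (k < size d)%N by [].
rewrite nth_uniq //; first exact: vd_uniq.
Qed.

Lemma pure_inj d d' : valid_degseq n M N d -> valid_degseq n M N d' ->
  pure_diagram n d = pure_diagram n d' -> d = d'.
Proof.
move=> v v' e.
have key : forall a b, valid_degseq n M N a -> valid_degseq n M N b ->
    pure_diagram n a = pure_diagram n b -> forall i, (i < size a)%N ->
    (i < size b)%N /\ nth 0%R a i = nth 0%R b i.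
  move=> a b va vb eab i lt.
  have /andP [_ s1] := vd_size va.
  have jn : (i < n.+1)%N by apply: leq_trans lt s1.
  have := pure_nz (i := Ordinal jn) va lt; rewrite eab /pure_diagram /=.
  case: ifP => [/andP [l /eqP ->] _|]; by [].
have szle : forall a b, valid_degseq n M N a -> valid_degseq n M N b ->
    pure_diagram n a = pure_diagram n b -> (size a <= size b)%N.
  move=> a b va vb eab; have /andP [s0 _] := vd_size va.
  have lp : ((size a).-1 < size a)%N by lia.
  have [h _] := key a b va vb eab _ lp; lia.
have sz : size d = size d' by apply/eqP; rewrite eqn_leq (szle _ _ v v' e) (szle _ _ v' v (esym e)).
apply: (@eq_from_nth _ 0%R) => // i lt; by case: (key _ _ v v' e i lt).
Qed.

End Iso.
From Stdlib Require Import ProofIrrelevance PropExtensionality IndefiniteDescription.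

Lemma sig_eq (A : Type) (P : A -> Prop) (x y : {a | P a}) : proj1_sig x = proj1_sig y -> x = y.
Proof. case: x => a pa; case: y => b pb /= e; subst b; f_equal; apply: proof_irrelevance. Qed.

Section Final.
Variables (n : nat) (M N : int).
Hypothesis hMN : (M <= N)%R.
Notation m := (absz (N - M)).
Notation KK := (KK m n).

Lemma hN : N = (M + m%:Z)%R.
Proof. lia. Qed.

Definition Phi (h : 'I_n.+1 -> nat) : array n := pure_diagram n (dh m M h).

Lemma pin b : pure_in_B n M N b <-> exists h, validh m h /\ b = Phi h.
Proof.
split.
- case=> d [vd ->]; exists (hd m M d); split; first exact: (valid_hd hN vd).
  by rewrite /Phi (dh_hd hN vd).
- case=> h [vh ->]; exists (dh m M h); split => //; exact: (valid_dh hN vh).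
Qed.

Lemma ple h h' : validh m h -> validh m h' ->
  pure_le n M N (Phi h) (Phi h') <-> hle h h'.
Proof.
move=> vh vh'; split.
- case=> d [d' [vd vd' e1 e2 dle]].
  have E1 : dh m M h = d := pure_inj hN (valid_dh hN vh) vd e1.
  have E2 : dh m M h' = d' := pure_inj hN (valid_dh hN vh') vd' e2.
  have := (le_iff hN vd vd').1 dle.
  by rewrite -E1 -E2 !(hd_dh hN).
- move=> hl; exists (dh m M h), (dh m M h'); split => //; try exact: (valid_dh hN vh); try exact: (valid_dh hN vh').
  by apply/(le_iff hN (valid_dh hN vh) (valid_dh hN vh')); rewrite !(hd_dh hN).
Qed.

Lemma Phi_inj h h' : validh m h -> validh m h' -> Phi h = Phi h' -> h = h'.
Proof.
move=> vh vh' e.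
have := pure_inj hN (valid_dh hN vh) (valid_dh hN vh') e.
move/(congr1 (@hd n m M)); by rewrite !(hd_dh hN).
Qed.

Lemma hle_refl (h : 'I_n.+1 -> nat) : hle h h.
Proof. by move=> j. Qed.

Definition Cf (f : 'I_m.+1 -> 'I_n.+1 -> nat) : array n -> Prop :=
  fun b => exists k, k < KK /\ b = Phi (Jk k f).

Lemma Cf_max f : is_numbering m.+1 n.+1 f -> is_maximal_chain n M N (Cf f).
Proof.
move=> hf.
have chain : is_chain n M N (Cf f).
  split.
  - move=> b [k [lt ->]]; apply/pin; exists (Jk k f); split => //; exact: (Jk_valid hf lt).
  - move=> b b' [k [lt ->]] [k' [lt' ->]].
    case: (leqP k k') => le.
      by left; apply/ple; [exact: (Jk_valid hf lt) | exact: (Jk_valid hf lt') | exact: Jk_mono].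
    by right; apply/ple; [exact: (Jk_valid hf lt') | exact: (Jk_valid hf lt) | apply: Jk_mono; exact: ltnW].
split => // C' [C'in C'c] sub b Cb.
case/pin: (C'in b Cb) => h [vh eb].
set s := hs h.
have slt : s < KK := hs_lt vh.
have Cs : Cf f (Phi (Jk s f)) by exists s.
have vJ : validh m (Jk s f) := Jk_valid hf slt.
have hsJ : hs (Jk s f) = s := hs_Jk hf (ltnW slt).
exists s; split => //; rewrite eb; congr Phi.
case: (C'c _ _ Cb (sub _ Cs)); rewrite eb.
- move/(ple vh vJ) => hl; apply: hle_eq hl _; by rewrite hsJ.
- move/(ple vJ vh) => hl; symmetry; apply: hle_eq hl _; by rewrite hsJ.
Qed.

Definition G (f : numbering m.+1 n.+1) : maximal_chain n M N :=
  exist _ (Cf (proj1_sig f)) (Cf_max (proj2_sig f)).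

Lemma G_inj : injective G.
Proof.
move=> [f hf] [g hg] /(congr1 (@proj1_sig _ _)) /= e.
apply: sig_eq => /=; apply: (num_eq hf hg) => k lt.
have : Cf g (Phi (Jk k f)) by rewrite -e; exists k.
case=> k' [lt' eP].
have e2 := Phi_inj (Jk_valid hf lt) (Jk_valid hg lt') eP.
have kk : k = k'.
  by rewrite -(hs_Jk hf (ltnW lt)) -(hs_Jk hg (ltnW lt')) e2.
by rewrite e2 kk.
Qed.

Lemma G_surj (C : maximal_chain n M N) : exists f, G f = C.
Proof.
case: C => C0 [[Cin Cc] Cmax].
pose Ch h := validh m h /\ C0 (Phi h).
have Chv : forall h, Ch h -> validh m h by move=> h [].
have Chc : forall h h', Ch h -> Ch h' -> hle h h' \/ hle h' h.
  move=> h h' [vh ch] [vh' ch'].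
  by case: (Cc _ _ ch ch') => /ple => [/(_ vh vh')|/(_ vh' vh)] H; [left|right]; apply/H.
have Chm : forall X, validh m X -> (forall h, Ch h -> hle h X \/ hle X h) -> Ch X.
  move=> X vX cmp; split => //.
  pose C' := fun b => C0 b \/ b = Phi X.
  have chain' : is_chain n M N C'.
    split.
    - move=> b [/Cin //|->]; apply/pin; by exists X.
    - have cmpb : forall b, C0 b -> pure_le n M N b (Phi X) \/ pure_le n M N (Phi X) b.
        move=> b cb; case/pin: (Cin _ cb) => h [vh eb]; subst b.
        by case: (cmp h (conj vh cb)) => hl; [left|right]; apply/ple.
      move=> b b' [cb|->] [cb'|->].
      + exact: Cc.
      + exact: cmpb.
      + by case: (cmpb _ cb'); [right|left].
      + by left; apply/ple => //; exact: hle_refl.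
  by apply: (Cmax C' chain'); [move=> b; left | right].
have sat : forall k, exists H, k < KK -> Ch H /\ hs H = k.
  move=> k; case: (ltnP k KK) => lt.
    by case: (Ch_sat Chv Chc Chm lt) => H [cH eH]; exists H.
  by exists (fun _ => 0%N).
pose H := fun k => proj1_sig (constructive_indefinite_description _ (sat k)).
have HP : forall k, k < KK -> Ch (H k) /\ hs (H k) = k.
  move=> k; exact: (proj2_sig (constructive_indefinite_description _ (sat k))).
have Hv : forall k, k < KK -> validh m (H k) by move=> k /HP [[]].
have Hs : forall k, k < KK -> hs (H k) = k by move=> k /HP [].
have Hn : forall k k', k <= k' -> k' < KK -> hle (H k) (H k').
  move=> k k' le lt'; have lt : k < KK by apply: leq_ltn_trans le lt'.
  case: (Chc _ _ (HP k lt).1 (HP k' lt').1) => // hl.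
  have e : H k' = H k.
    have := hle_hs hl; rewrite Hs // Hs // => le2; apply: (hle_eq hl); rewrite Hs // Hs //; lia.
  rewrite e; exact: hle_refl.
exists (exist _ (fromH H) (fromH_num Hv Hs Hn)).
apply: sig_eq => /=.
apply: functional_extensionality => b; apply: propositional_extensionality; split.
- case=> k [lt ->]; rewrite (Jk_fromH Hv Hn lt); exact: (HP k lt).1.2.
- move=> cb; case/pin: (Cin _ cb) => h [vh eb].
  set s := hs h; have slt : s < KK := hs_lt vh.
  exists s; split => //; rewrite (Jk_fromH Hv Hn slt) eb; congr Phi.
  apply: (Ch_uniq Chc) => //; first by split => //; rewrite -eb.
  - exact: (HP s slt).1.
  - by rewrite (HP s slt).2.
Qed.

End Final.

Local Open Scope ring_scope.

Theorem proposition2p4 (n : nat) (M N : int) :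
  (1 <= n)%N -> M <= N ->
  exists f : maximal_chain n M N -> numbering (absz (N - M)).+1 n.+1,
    bijective f.
Proof.
move=> _ hMN.
pose F := fun C => proj1_sig (constructive_indefinite_description _ (@G_surj n M N hMN C)).
have FG : forall C, @G n M N hMN (F C) = C.
  move=> C; exact: (proj2_sig (constructive_indefinite_description _ (@G_surj n M N hMN C))).
exists F; exists (@G n M N hMN) => //.
move=> f; apply: (@G_inj n M N hMN); by rewrite FG.
Qed.
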